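(* Let $\lambda>0$, $1<p<\infty$, $\alpha\in\mathbb R$, and $w(t):=t^{\alpha}$ on $\mathbb R_+=(0,\infty)$. Then (1) $w\in A_p(\mu)$ if and only if $-1-2\lambda<\alpha<p-1+2\lambda(p-1)$; (2) $w\in \widetilde A_{p,\lambda}$ if and only if $-1<\alpha<p-1+(2\lambda+1)p$.
   Context: On $\mathbb R_+=(0,\infty)$ let $d\mu(x)=x^{2\lambda}\,dx$ and $d\nu_\lambda(x)=x^{2\lambda+1}\,dx$, where $dx$ is Lebesgue measure; ''interval'' means an interval $B=(a,b)\subset\mathbb R_+$; $p'=p/(p-1)$. $A_p(\mu)$ is the classical Muckenhoupt class on $(\mathbb R_+,|\cdot|,\mu)$: $w\ge0$ with $\sup_B\big(\frac1{\mu(B)}\int_B w\,d\mu\big)\big(\frac1{\mu(B)}\int_B w^{-1/(p-1)}\,d\mu\big)^{p-1}<\infty$, the supremum over intervals $B\subset\mathbb R_+$. $\widetilde A_{p,\lambda}$ is the class of non-negative measurable $w$ for which there is $C>0$ such that for every interval $B\subset\mathbb R_+$, $\big(\frac1{\nu_\lambda(B)}\int_B w(t)\,dt\big)\big(\frac1{\nu_\lambda(B)}\int_B t^{(2\lambda+1)p'}w(t)^{-\frac1{p-1}}\,dt\big)^{p-1}<C.$ *)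

(* Defs.v *)
From HB Require Import structures.
From mathcomp Require Import all_boot all_order all_algebra.
From mathcomp Require Import all_classical all_reals all_analysis.
Set Implicit Arguments. Unset Strict Implicit. Unset Printing Implicit Defensive.
Import Order.TTheory GRing.Theory Num.Theory.
Local Open Scope classical_set_scope.
Local Open Scope ring_scope.

Section Defs.
Variable R : realType.

Definition wint (g f : R -> R) (a b : R) : \bar R :=
  (\int[lebesgue_measure]_(x in `]a, b[) (f x * g x)%:E)%E.

Definition dmu (lam : R) : R -> R := fun x => x `^ (2 * lam).
Definition dnu (lam : R) : R -> R := fun x => x `^ (2 * lam + 1).

Definition wmeas (g : R -> R) (a b : R) : \bar R := wint g (fun _ => 1) a b.

Definition wavg (g : R -> R) (f : R -> R) (a b : R) : \bar R :=
  ((fine (wmeas g a b))^-1)%:E * wint g f a b.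

Definition conj_exp (p : R) : R := p / (p - 1).

Definition Ap_mu (lam p : R) (w : R -> R) : Prop :=
  (forall x, 0 < x -> 0 <= w x) /\
  exists C : R, forall a b : R, 0 <= a -> a < b ->
    (wavg (dmu lam) w a b *
      poweR (wavg (dmu lam) (fun t => (w t `^ (- (p - 1)^-1))%R) a b) (p - 1)
      < C%:E)%E.

Definition Atilde (lam p : R) (w : R -> R) : Prop :=
  (forall x, 0 < x -> 0 <= w x) /\
  exists C : R, forall a b : R, 0 <= a -> a < b ->
    (((fine (wmeas (dnu lam) a b))^-1)%:E * wint (fun _ => 1%R) w a b *
      poweR (((fine (wmeas (dnu lam) a b))^-1)%:E *
             wint (fun _ => 1%R)
               (fun t => (t `^ ((2 * lam + 1) * conj_exp p) * w t `^ (- (p - 1)^-1))%R) a b)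
            (p - 1)
      < C%:E)%E.

End Defs.

(* Main.v *)
Require Import Defs.
From HB Require Import structures.
From mathcomp Require Import all_boot all_order all_algebra.
From mathcomp Require Import all_classical all_reals all_analysis.
From mathcomp Require Import ring lra measurable_realfun.
Import Order.TTheory GRing.Theory Num.Theory numFieldNormedType.Exports.
Local Open Scope ring_scope.

Section S.
Set Implicit Arguments. Unset Strict Implicit.
Variable R : realType.
Notation mu := lebesgue_measure.
Local Open Scope classical_set_scope.
Implicit Types u r : R.

Lemma bern u r : 0 <= u -> u <= 1 -> 0 <= r -> 1 - u `^ r <= 2 * (1 + r) * (1 - u).
Proof.
move=> u0 u1 r0.
have [uh|uh] := leP u (2^-1).
  have := powR_ge0 u r. have h2 : (2:R)^-1 * 2 = 1 by field.
  nra.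
have upos : 0 < u by apply: lt_trans uh; rewrite invr_gt0.
rewrite /powR gt_eqF //.
have e := expR_ge1Dx (r * ln u).
have hv : u * u^-1 = 1 by rewrite mulfV // gt_eqF.
have hl : 1 - u^-1 <= ln u.
  have vpos : 0 < u^-1 by rewrite invr_gt0.
  have := @le_ln1Dx _ (u^-1 - 1).
  rewrite (addrC 1) subrK lnV ?posrE // => H; have := H ltac:(lra); lra.
have hv2 : u^-1 < 2.
  rewrite -(invrK 2) ltf_pV2 ?posrE ?invr_gt0 //.
have : r * (1 - u^-1) <= r * ln u by rewrite ler_wpM2l.
move=> h1.
have h3 : u^-1 - 1 = u^-1 * (1 - u) by nra.
have h4 : r * (u^-1 * (1 - u)) <= r * (2 * (1 - u)).
  apply: ler_wpM2l => //; apply: ler_wpM2r; lra.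
nra.
Qed.

Lemma powdiff (a b s s0 : R) : 0 <= a -> a < b -> 0 < s -> 0 < s0 ->
 b `^ s - a `^ s <= 2 * (1 + s/s0) * b `^ (s - s0) * (b `^ s0 - a `^ s0).
Proof.
move=> a0 ab s0' s00.
have b0 : 0 < b by apply: le_lt_trans ab.
set t := a / b.
have ta : a = t * b by rewrite /t divfK // gt_eqF.
have t0 : 0 <= t by rewrite /t divr_ge0 // ltW.
have t1 : t <= 1 by rewrite /t ler_pdivrMr // mul1r ltW.
set r := s / s0.
have r0 : 0 <= r by rewrite /r divr_ge0 // ltW.
have hs : s = s0 * r by rewrite /r mulrC divfK // gt_eqF.
have u1 : t `^ s0 <= 1.
  have := @ge0_ler_powR _ s0 (ltW s00) t 1; rewrite powR1; apply => //; by rewrite nnegrE.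
have hB := @bern (t `^ s0) r (powR_ge0 t s0) u1 r0.
have eas : a `^ s = (t `^ s0) `^ r * b `^ s by rewrite ta powRM // ?(ltW b0) // -powRrM -hs.
have eas0 : a `^ s0 = t `^ s0 * b `^ s0 by rewrite ta powRM // ltW.
have ebs : b `^ s = b `^ (s - s0) * b `^ s0.
  by rewrite -powRD ?subrK // gt_eqF // implybT.
rewrite eas eas0 ebs.
have p1 := powR_gt0 (s - s0) b0.
have p2 := powR_gt0 s0 b0.
have hp : 0 <= b `^ (s - s0) * b `^ s0 by rewrite mulr_ge0 // ltW.
set U := t `^ s0. set V := U `^ r.
set P := b `^ (s - s0) * b `^ s0.
have : P * (1 - V) <= P * (2 * (1 + r) * (1 - U)) by rewrite ler_wpM2l.
rewrite /P. nra.
Qed.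

Definition D (s a b : R) := (b `^ s - a `^ s) / s.

Lemma Dpos s a b : 0 <= a -> a < b -> 0 < s -> 0 < D s a b.
Proof.
move=> a0 ab s0; rewrite /D divr_gt0 // subr_gt0.
by apply: gt0_ltr_powR => //; rewrite nnegrE //; apply: ltW; apply: le_lt_trans ab.
Qed.

Definition cst_c (s s0 : R) := (s0 / s) * (2 * (1 + s / s0)).

Lemma Dratio s s0 a b : 0 <= a -> a < b -> 0 < s -> 0 < s0 ->
  D s a b / D s0 a b <= cst_c s s0 * b `^ (s - s0).
Proof.
move=> a0 ab s0' s00.
have h := powdiff a0 ab s0' s00.
have X0 : 0 < b `^ s0 - a `^ s0 by have := Dpos a0 ab s00; rewrite /D pmulr_lgt0 // invr_gt0.
rewrite /D /cst_c ler_pdivrMr; last by have := Dpos a0 ab s00.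
have -> : s0 / s * (2 * (1 + s / s0)) * b `^ (s - s0) * ((b `^ s0 - a `^ s0) / s0)
   = (2 * (1 + s / s0) * b `^ (s - s0) * (b `^ s0 - a `^ s0)) / s.
  by field; rewrite ?gt_eqF.
by rewrite ler_wpM2r // invr_ge0 ltW.
Qed.

Lemma prodbound s0 s1 s2 q a b : 0 <= a -> a < b -> 0 < s0 -> 0 < s1 -> 0 < s2 -> 0 < q ->
  s1 + q * s2 = (1 + q) * s0 ->
  D s1 a b / D s0 a b * (D s2 a b / D s0 a b) `^ q <= cst_c s1 s0 * (cst_c s2 s0) `^ q.
Proof.
move=> a0 ab p0 p1 p2 q0 e.
have b0 : 0 < b by apply: le_lt_trans ab.
have h1 := Dratio a0 ab p1 p0.
have h2 := Dratio a0 ab p2 p0.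
have d0 := Dpos a0 ab p0.
have d1 := Dpos a0 ab p1.
have d2 := Dpos a0 ab p2.
have c2 : 0 <= cst_c s2 s0.
  rewrite /cst_c; apply: mulr_ge0; first by apply: divr_ge0; apply: ltW.
  apply: mulr_ge0 => //; apply: addr_ge0 => //; apply: divr_ge0; apply: ltW => //.
have h3 : (D s2 a b / D s0 a b) `^ q <= (cst_c s2 s0 * b `^ (s2 - s0)) `^ q.
  apply: ge0_ler_powR => //; [exact: ltW | rewrite nnegrE divr_ge0 // ltW //| by rewrite nnegrE mulr_ge0 // powR_ge0].
rewrite [X in _ <= X]powRM ?powR_ge0 // -powRrM in h3.
have h4 : D s1 a b / D s0 a b * (D s2 a b / D s0 a b) `^ q <=
   cst_c s1 s0 * b `^ (s1 - s0) * (cst_c s2 s0 `^ q * b `^ ((s2 - s0) * q)).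
  apply: ler_pM => //; [by rewrite divr_ge0 // ltW| exact: powR_ge0].
apply: (le_trans h4).
have -> : cst_c s1 s0 * b `^ (s1 - s0) * (cst_c s2 s0 `^ q * b `^ ((s2 - s0) * q))
  = cst_c s1 s0 * cst_c s2 s0 `^ q * (b `^ (s1 - s0) * b `^ ((s2 - s0) * q)) by ring.
rewrite -powRD; last by rewrite (gt_eqF b0) implybT.
have -> : s1 - s0 + (s2 - s0) * q = 0 by lra.
by rewrite powRr0 mulr1.
Qed.

Lemma mpow (s : R) (A : set R) : measurable A -> measurable_fun A ((fun x => (x `^ s)%:E) : R -> \bar R).
Proof.
move=> mA; apply/measurable_EFinP; apply: measurable_funTS; exact: measurable_powR.
Qed.

Lemma contpow (s x : R) : 0 < x -> {for x, continuous (fun y : R => y `^ s)}.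
Proof.
move=> x0; apply: differentiable_continuous; apply/derivable1_diffP.
by apply: derivable_powR; rewrite in_itv /= x0.
Qed.

Lemma ftc_pos (s a b : R) : 0 < a -> a < b -> s != 0 ->
  (\int[mu]_(x in `]a, b[) (x `^ (s - 1))%:E = (D s a b)%:E)%E.
Proof.
move=> a0 ab s0.
rewrite -(@integral_itv_bndoo _ _ _ _ true false); last exact: mpow.
have -> : (D s a b)%:E = (((fun x => s^-1 * x `^ s) b)%:E - ((fun x => s^-1 * x `^ s) a)%:E)%E.
  by rewrite -EFinB /D; congr EFin; rewrite mulrC mulrBr.
apply: (@continuous_FTC2 _ (fun x : R => x `^ (s - 1)) (fun x : R => s^-1 * x `^ s)) => //.
- apply: continuous_in_subspaceT => x; rewrite inE /= in_itv /= => /andP[ax _].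
  apply: contpow; exact: lt_le_trans ax.
- split.
  + move=> x; rewrite in_itv /= => /andP[ax _].
    apply: derivableM => //; apply: derivable_powR; rewrite in_itv /= andbT; exact: lt_trans ax.
  + apply: cvg_at_right_filter; apply: cvgM; first exact: cvg_cst.
    exact: contpow.
  + apply: cvg_at_left_filter; apply: cvgM; first exact: cvg_cst.
    apply: contpow; exact: lt_trans ab.
- move=> x; rewrite in_itv /= => /andP[ax _].
  have x0 : 0 < x by exact: lt_trans ax.
  rewrite derive1E deriveM //=; last by apply: derivable_powR; rewrite in_itv /= x0.
  rewrite -derive1E powR_derive1 ?in_itv /= ?x0 // derive_cst scaler0 addr0.
  by rewrite /GRing.scale /= mulrA mulVf // mul1r.
Qed.

Lemma ftc0 (s b : R) : 0 < b -> 0 < s ->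
  (\int[mu]_(x in `]0%R, b[) (x `^ (s - 1))%:E = (D s 0 b)%:E)%E.
Proof.
move=> b0 s0.
pose u (n : nat) : R := b * (n.+2%:R)^-1.
have u0 n : 0 < u n by rewrite /u mulr_gt0 // invr_gt0.
have ub n : u n < b by rewrite /u gtr_pMr // invf_lt1 // ltr1n.
pose F (n : nat) := `](u n), b[.
have nd : nondecreasing_seq F.
  apply/nondecreasing_seqP => n; rewrite subsetEset; apply: subset_itvr.
  rewrite bnd_simp /u ler_pM2l // lef_pV2 ?posrE // ler_nat.
  by [].
have mF n : measurable (F n) by exact: measurable_itv.
have H := @ge0_nondecreasing_set_cvg_integral _ (measurableTypeR R) _ F (fun x => (x `^ (s - 1))%:E) mu nd mF
   (fun n => mpow (s - 1) (mF n)) (fun n x _ => powR_ge0 x (s - 1)).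
have EU : \bigcup_i F i = `]0, b[.
  rewrite eqEsubset; split.
    move=> x [n _]; rewrite /F /= !in_itv /= => /andP[h1 ->]; rewrite andbT.
    exact: lt_trans h1.
  move=> x; rewrite /= in_itv /= => /andP[x0 xb].
  exists (Num.Def.trunc (b / x)) => //; rewrite /F /= in_itv /= xb andbT /u.
  set k := (Num.Def.trunc (b / x)).+2%:R.
  have hk : b / x < k by apply: (lt_le_trans (truncnS_gt _)); rewrite /k ler_nat.
  have k0 : 0 < k by rewrite /k ltr0n.
  by rewrite ltr_pdivrMr // -ltr_pdivrMl // mulrC.
rewrite EU in H.
have E : (fun i => \int[mu]_(x in F i) (x `^ (s - 1))%:E)%E = (fun i => (D s (u i) b)%:E).
  by apply/funext => n; rewrite ftc_pos // gt_eqF.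
rewrite E in H.
have H2 : (fun i => (D s (u i) b)%:E) @ \oo --> (D s 0 b)%:E.
  apply: cvg_EFin; first exact: nearW.
  have hu : u n @[n --> \oo] --> 0.
    have : [sequence harmonic n.+1]_n @ \oo --> (0:R) by rewrite cvg_shiftS; exact: cvg_harmonic.
    move=> h; rewrite -(mulr0 b); apply: cvgMr; exact: h.
  have hp : (u n) `^ s @[n --> \oo] --> 0.
    by move/cvg_at_rightP : (powR_cvg0 s0); apply; split.
  rewrite /D powR0 ?gt_eqF //.
  apply: cvgMl; apply: cvgB => //; exact: cvg_cst.
exact: (cvg_unique _ H H2).
Qed.

Lemma D01 s : 0 < s -> D s 0 1 = s^-1.
Proof. by move=> s0; rewrite /D powR0 ?gt_eqF // powR1 subr0 div1r. Qed.

Lemma div01 (s : R) : s <= 0 ->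
  (\int[mu]_(x in `]0%R, 1%R[) (x `^ (s - 1))%:E = +oo)%E.
Proof.
move=> s0.
have lb d : 0 < d -> d < 1 -> ((d^-1)%:E <= \int[mu]_(x in `]0%R, 1%R[) (x `^ (s - 1))%:E)%E.
  move=> d0 d1; rewrite -D01 // -ftc0 //.
  apply: ge0_le_integral => //.
  - by move=> x _; rewrite lee_fin powR_ge0.
  - exact: mpow.
  - exact: mpow.
  move=> x; rewrite /= in_itv /= => /andP[x0 x1]; rewrite lee_fin.
  apply: ger_powR; [by rewrite x0 ltW | lra].
case E : (\int[mu]_(x in `]0%R, 1%R[) (x `^ (s - 1))%:E)%E => [r| |] //.
  exfalso.
  have r0 : 0 < `|r| + 2 by rewrite ltr_wpDl.
  have h1 : 0 < (`|r| + 2)^-1 by rewrite invr_gt0.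
  have h2 : (`|r| + 2)^-1 < 1 by rewrite invf_lt1 //; have := normr_ge0 r; lra.
  have := lb _ h1 h2; rewrite invrK E lee_fin.
  have := ler_norm r; lra.
exfalso.
have h1 : (0:R) < 2^-1 by rewrite invr_gt0.
have h2 : (2:R)^-1 < 1 by rewrite invf_lt1 // ltr1n.
by have := lb _ h1 h2; rewrite E leeNy_eq.
Qed.

Definition PI (s a b : R) : \bar R := (\int[mu]_(x in `]a, b[) (x `^ (s - 1))%:E)%E.

Lemma PI_fin s a b : 0 <= a -> a < b -> 0 < s -> PI s a b = (D s a b)%:E.
Proof.
move=> a0 ab s0; rewrite /PI; have [a00|a0'] := eqVneq a 0.
  by subst a; apply: ftc0.
by apply: ftc_pos; rewrite ?gt_eqF // lt_neqAle eq_sym a0' a0.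
Qed.

Lemma PI01_gt0 s : (0 < PI s 0 1)%E.
Proof.
have [s0|s0] := ltP 0 s.
  by rewrite PI_fin // D01 // lte_fin invr_gt0.
by rewrite /PI div01.
Qed.

Definition Q s0 s1 s2 q a b : \bar R :=
  (((fine (PI s0 a b))^-1)%:E * PI s1 a b *
    poweR (((fine (PI s0 a b))^-1)%:E * PI s2 a b) q)%E.

Lemma key s0 s1 s2 q : 0 < s0 -> 0 < q -> s1 + q * s2 = (1 + q) * s0 ->
  (exists C : R, forall a b : R, 0 <= a -> a < b -> (Q s0 s1 s2 q a b < C%:E)%E) <->
  (0 < s1 /\ 0 < s2).
Proof.
move=> p0 q0 e; split.
  move=> [C HC].
  have HQ := HC 0 1 (lexx _) ltr01.
  move: HQ; rewrite /Q PI_fin // D01 // /= invrK.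
  have g1 := PI01_gt0 s1. have g2 := PI01_gt0 s2.
  have hs0 : (0 < s0%:E)%E by rewrite lte_fin.
  split; rewrite ltNge; apply/negP => hs.
    move: HQ; rewrite (_ : PI s1 0 1 = +oo%E); last exact: div01.
    rewrite gt0_muley //.
    by rewrite gt0_mulye ?poweR_gt0 ?mule_gt0.
  move: HQ; rewrite (_ : PI s2 0 1 = +oo%E); last exact: div01.
  rewrite gt0_muley // poweRyr ?gt_eqF //.
  by rewrite gt0_muley ?mule_gt0.
move=> [p1 p2].
exists (cst_c s1 s0 * (cst_c s2 s0) `^ q + 1) => a b a0 ab.
rewrite /Q !PI_fin //= -!EFinM lte_fin.
have h := prodbound a0 ab p0 p1 p2 q0 e.
have -> : (D s0 a b)^-1 * D s1 a b * ((D s0 a b)^-1 * D s2 a b) `^ q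
   = D s1 a b / D s0 a b * (D s2 a b / D s0 a b) `^ q by rewrite !(mulrC (D s0 a b)^-1).
apply: (le_lt_trans h); by rewrite ltrDl.
Qed.

Lemma wint_PI (g f : R -> R) s a b : 0 <= a ->
  (forall x, 0 < x -> f x * g x = x `^ (s - 1)) -> wint g f a b = PI s a b.
Proof.
move=> a0 h; rewrite /wint /PI; apply: eq_integral => x.
rewrite inE /= in_itv /= => /andP[ax _]; rewrite h //; exact: le_lt_trans ax.
Qed.

Lemma powRDm1 (x r t u : R) : 0 < x -> r + t = u - 1 -> x `^ r * x `^ t = x `^ (u - 1).
Proof. by move=> x0 e; rewrite -powRD ?e // (gt_eqF x0) implybT. Qed.
End S.

Theorem proposition1p1 (R : realType) (lam p alpha : R)
  (hlam : 0 < lam) (hp : 1 < p) :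
  let w := fun t : R => t `^ alpha in
  (Ap_mu lam p w <-> (-1 - 2 * lam < alpha /\ alpha < p - 1 + 2 * lam * (p - 1))) /\
  (Atilde lam p w <-> (-1 < alpha /\ alpha < p - 1 + (2 * lam + 1) * p)).
Proof.
move=> w.
have q0 : 0 < p - 1 by rewrite subr_gt0.
have qn0 : p - 1 != 0 by rewrite gt_eqF.
set v := (p - 1)^-1.
have hw x : 0 < x -> 0 <= w x by move=> _; exact: powR_ge0.
split.
- pose s0 := 2 * lam + 1. pose s1 := alpha + 2 * lam + 1.
  pose s2 := alpha * - v + 2 * lam + 1.
  have e0 a b : 0 <= a -> wmeas (dmu lam) a b = PI s0 a b.
    move=> a0; apply: wint_PI => // x x0; rewrite mul1r /dmu /s0; congr powR; ring.
  have e1 a b : 0 <= a -> wint (dmu lam) w a b = PI s1 a b.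
    move=> a0; apply: wint_PI => // x x0; rewrite /w /dmu /s1; apply: powRDm1 => //; ring.
  have e2 a b : 0 <= a -> wint (dmu lam) (fun t => w t `^ (- (p - 1)^-1)) a b = PI s2 a b.
    move=> a0; apply: wint_PI => // x x0; rewrite /w /dmu /s2 -powRrM; apply: powRDm1 => //.
    rewrite /v; ring.
  have K := @key R s0 s1 s2 (p - 1).
  have es : s1 + (p - 1) * s2 = (1 + (p - 1)) * s0.
    by rewrite /s0 /s1 /s2 /v; field.
  have := K ltac:(rewrite /s0; lra) q0 es.
  have v0 : 0 < v by rewrite /v invr_gt0.
  have c1 : (0 < s1) <-> (-1 - 2 * lam < alpha) by rewrite /s1; split => ?; lra.
  have c2 : (0 < s2) <-> (alpha < p - 1 + 2 * lam * (p - 1)).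
    have -> : s2 = ((2 * lam + 1) * (p - 1) - alpha) * v by rewrite /s2 /v; field.
    rewrite pmulr_lgt0 //; split => ?; lra.
  have EQ a b : 0 <= a -> (wavg (dmu lam) w a b *
      poweR (wavg (dmu lam) (fun t : R => (w t `^ (- (p - 1)^-1))%R) a b) (p - 1) =
      Q s0 s1 s2 (p - 1) a b)%E.
    by move=> a0; rewrite /wavg /Q e0 // e1 // e2.
  move=> K'; rewrite /Ap_mu; split.
    move=> [_ [C HC]].
    have [h1 h2] : 0 < s1 /\ 0 < s2.
      by apply/K'; exists C => a b a0 ab; rewrite -EQ //; exact: HC.
    by split; [apply/c1 | apply/c2].
  move=> [h1 h2]; split => //.
  have [C HC] := (proj2 K') (conj (proj2 c1 h1) (proj2 c2 h2)).
  by exists C => a b a0 ab; rewrite EQ //; exact: HC.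
- pose s0 := 2 * lam + 2. pose s1 := alpha + 1.
  pose s2 := (2 * lam + 1) * conj_exp p + alpha * - v + 1.
  have e0 a b : 0 <= a -> wmeas (dnu lam) a b = PI s0 a b.
    move=> a0; apply: wint_PI => // x x0; rewrite mul1r /dnu /s0; congr powR; ring.
  have e1 a b : 0 <= a -> wint (fun _ => 1%R) w a b = PI s1 a b.
    move=> a0; apply: wint_PI => // x x0; rewrite mulr1 /w /s1; congr powR; ring.
  have e2 a b : 0 <= a -> wint (fun _ => 1%R)
      (fun t => (t `^ ((2 * lam + 1) * conj_exp p) * w t `^ (- (p - 1)^-1))%R) a b = PI s2 a b.
    move=> a0; apply: wint_PI => // x x0; rewrite mulr1 /w /s2 -powRrM; apply: powRDm1 => //.
    rewrite /v; ring.
  have K := @key R s0 s1 s2 (p - 1).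
  have es : s1 + (p - 1) * s2 = (1 + (p - 1)) * s0.
    by rewrite /s0 /s1 /s2 /v /conj_exp; field.
  have := K ltac:(rewrite /s0; lra) q0 es.
  have v0 : 0 < v by rewrite /v invr_gt0.
  have c1 : (0 < s1) <-> (-1 < alpha) by rewrite /s1; split => ?; lra.
  have c2 : (0 < s2) <-> (alpha < p - 1 + (2 * lam + 1) * p).
    have -> : s2 = ((2 * lam + 1) * p + (p - 1) - alpha) * v.
      by rewrite /s2 /v /conj_exp; field.
    rewrite pmulr_lgt0 //; split => ?; lra.
  have EQ a b : 0 <= a -> (((fine (wmeas (dnu lam) a b))^-1)%:E * wint (fun _ => 1%R) w a b *
      poweR (((fine (wmeas (dnu lam) a b))^-1)%:E *
             wint (fun _ => 1%R)
               (fun t => (t `^ ((2 * lam + 1) * conj_exp p) * w t `^ (- (p - 1)^-1))%R) a b)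
            (p - 1) = Q s0 s1 s2 (p - 1) a b)%E.
    by move=> a0; rewrite /Q e0 // e1 // e2.
  move=> K'; rewrite /Atilde; split.
    move=> [_ [C HC]].
    have [h1 h2] : 0 < s1 /\ 0 < s2.
      by apply/K'; exists C => a b a0 ab; rewrite -EQ //; exact: HC.
    by split; [apply/c1 | apply/c2].
  move=> [h1 h2]; split => //.
  have [C HC] := (proj2 K') (conj (proj2 c1 h1) (proj2 c2 h2)).
  by exists C => a b a0 ab; rewrite EQ //; exact: HC.
Qed.
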